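(* Let $\delta\in(0,1)$, $A>0$, $D>0$, $B>0$, and define $H(z)=Az-Bz^{1+\delta}-Dz^{1-\delta}$ for $z>0$, and $H^{\max}=\sup_{z>0}H(z)$. Then: (a) for $B\in(0,A^2/(4D))$ we have $H^{\max}>0$, the set $\{z>0: H(z)>0\}$ is an interval $(\mu,\nu)$, and $H^{\max}=H(z_0)$ for some $z_0\in(\mu,\nu)$; (b) $H^{\max}\to0^+$ and $\nu-\mu\to0^+$ as $B\to (A^2/(4D))^-$; (c) for every $p>0$ there is $B(p)\in(0,A^2/(4D))$ such that $H^{\max}=p$ when $B=B(p)$, and $B(p)\to A^2/(4D)$ as $p\to0^+$.
   Context: Here $\mu=\mu(B)$, $\nu=\nu(B)$ depend on $B$ (with $A,D,\delta$ fixed). *)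

(* Defs.v *)
From HB Require Import structures.
From mathcomp Require Import all_boot all_order all_algebra.
From mathcomp Require Import all_classical all_reals all_analysis.
Set Implicit Arguments. Unset Strict Implicit. Unset Printing Implicit Defensive.
Import Order.TTheory GRing.Theory Num.Theory.
Import numFieldNormedType.Exports.
Local Open Scope classical_set_scope.
Local Open Scope ring_scope.

Definition Hfun (R : realType) (A B D delta z : R) : R :=
  A * z - B * z `^ (1 + delta) - D * z `^ (1 - delta).

Definition Hmax (R : realType) (A B D delta : R) : R :=
  sup [set Hfun A B D delta z | z in [set z : R | 0 < z]].

(* Main.v *)
Require Import Defs.
From HB Require Import structures.
From mathcomp Require Import all_boot all_order all_algebra.
From mathcomp Require Import all_classical all_reals all_analysis.
From mathcomp Require Import ring lra.
Import Order.TTheory GRing.Theory Num.Theory.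
Import numFieldNormedType.Exports.
Local Open Scope classical_set_scope.
Local Open Scope ring_scope.

Section S.
Context {R : realType}.

Lemma powR_cont (r z : R) : 0 < z -> {for z, continuous (fun x : R => x `^ r)}.
Proof.
move=> z0.
apply/differentiable_continuous/derivable1_diffP/derivable_powR.
by rewrite in_itv /= z0.
Qed.

Lemma powRK {d z : R} : 0 < d -> 0 <= z -> (z `^ d) `^ d^-1 = z.
Proof. by move=> d0 z0; rewrite -powRrM mulfV ?gt_eqF // powRr1. Qed.

Lemma powRVK {d z : R} : 0 < d -> 0 <= z -> (z `^ d^-1) `^ d = z.
Proof. by move=> d0 z0; rewrite -powRrM mulVf ?gt_eqF // powRr1. Qed.

Lemma powR_ltE (r x y : R) : 0 < r -> 0 <= x -> 0 <= y -> (x `^ r < y `^ r) = (x < y).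
Proof.
move=> r0 x0 y0; apply/idP/idP; last by apply: gt0_ltr_powR; rewrite ?nnegrE.
move=> h; rewrite -(powRK r0 x0) -(powRK r0 y0).
by apply: gt0_ltr_powR; rewrite ?nnegrE ?powR_ge0 // invr_gt0.
Qed.

Lemma powR_leE (r x y : R) : 0 < r -> 0 <= x -> 0 <= y -> (x `^ r <= y `^ r) = (x <= y).
Proof.
move=> r0 x0 y0; by rewrite !leNgt powR_ltE.
Qed.

Lemma Hfun_fact (A B D d z : R) : 0 < z ->
  Hfun A B D d z = (z / z `^ d) * (A * z `^ d - B * (z `^ d) ^+ 2 - D).
Proof.
move=> z0; have w0 : 0 < z `^ d by apply: powR_gt0.
rewrite /Hfun (@powRD _ z 1 d); last by apply/implyP => _; rewrite gt_eqF.
rewrite (@powRD _ z 1 (-d)); last by apply/implyP => _; rewrite gt_eqF.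
have e : z `^ (-d) = (z `^ d)^-1 by apply: powRN.
rewrite e powRr1 ?ltW //.
by field; rewrite gt_eqF.
Qed.
End S.

Lemma to_right {R : realType} {T} (F : set_system T) {FF : Filter F} (f : T -> R) :
  f @ F --> 0 -> (\forall x \near F, 0 < f x) -> f @ F --> 0^'+.
Proof.
move=> fc fp P /= HP.
have h0 : nbhs (0:R) (fun y => 0 < y -> P y) by exact: HP.
have h := fc _ h0.
have h' : F (fun x => 0 < f x -> P (f x)) := h.
have h2 : F (fun x => P (f x)) by apply: filterS2 h' fp => x h1 h2; exact: h1 h2.
exact: h2.
Qed.

Section Q.
Variables (R : realType) (delta A D : R).
Hypotheses (d0 : 0 < delta) (d1 : delta < 1) (A0 : 0 < A) (D0 : 0 < D).

Definition cc := A ^+ 2 / (4 * D).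
Definition sq B := Num.sqrt (A ^+ 2 - 4 * B * D).
Definition w1 B := (A - sq B) / (2 * B).
Definition w2 B := (A + sq B) / (2 * B).
Definition mu B := w1 B `^ delta^-1.
Definition nu B := w2 B `^ delta^-1.

Lemma cc_gt0 : 0 < cc.
Proof. by rewrite /cc divr_gt0 ?exprn_gt0 ?mulr_gt0. Qed.

Lemma ltcc B : (B < cc) = (4 * B * D < A ^+ 2).
Proof. by rewrite /cc ltr_pdivlMr ?mulr_gt0 // mulrAC mulrC. Qed.

Lemma Hcont B z : 0 < z -> {for z, continuous (Hfun A B D delta)}.
Proof.
move=> z0.
have -> : Hfun A B D delta = ((fun=> A) \* id) - ((fun=> B) \* (fun y => y `^ (1 + delta)))
   - ((fun=> D) \* (fun y => y `^ (1 - delta))) by apply/funext.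
apply: continuousB; first apply: continuousB.
- by apply: continuousM; [exact: cst_continuous | exact: cvg_id].
- by apply: continuousM; [exact: cst_continuous | exact: powR_cont].
- by apply: continuousM; [exact: cst_continuous | exact: powR_cont].
Qed.

Section B.
Variable B : R.
Hypotheses (B0 : 0 < B) (Bc : B < cc).

Lemma disc_gt0 : 0 < A ^+ 2 - 4 * B * D.
Proof. by rewrite subr_gt0 -ltcc. Qed.

Lemma sq_gt0 : 0 < sq B.
Proof. by rewrite /sq sqrtr_gt0 disc_gt0. Qed.

Lemma sq_sqr : sq B ^+ 2 = A ^+ 2 - 4 * B * D.
Proof. by rewrite /sq sqr_sqrtr // ltW // disc_gt0. Qed.

Lemma sq_ltA : sq B < A.
Proof.
have h := sq_sqr; have s0 := sq_gt0.
have hBD : 0 < 4 * B * D by rewrite !mulr_gt0.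
rewrite -(@ltr_pXn2r _ 2) ?nnegrE ?ltW // h; lra.
Qed.

Lemma w1_gt0 : 0 < w1 B.
Proof. by rewrite /w1 divr_gt0 ?mulr_gt0 // subr_gt0 sq_ltA. Qed.

Lemma w1_lt_w2 : w1 B < w2 B.
Proof. rewrite /w1 /w2 ltr_pM2r ?invr_gt0 ?mulr_gt0 //; have := sq_gt0; lra. Qed.

Lemma w2_ltAB : w2 B < A / B.
Proof.
rewrite /w2 ltr_pdivrMr ?mulr_gt0 // mulrA mulrAC divfK ?gt_eqF //.
have := sq_ltA; lra.
Qed.

Lemma w1_geDA : D / A <= w1 B.
Proof.
have e : w1 B = 2 * D / (A + sq B).
  have s0 := sq_gt0; have As : A + sq B != 0 by rewrite gt_eqF ?addr_gt0.
  have k : A - sq B = 4 * B * D / (A + sq B).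
    apply: (mulIf As); rewrite divfK //.
    transitivity (A ^+ 2 - sq B ^+ 2); first by ring.
    by rewrite sq_sqr; ring.
  by rewrite /w1 k; field; rewrite As gt_eqF.
rewrite e ler_pdivrMr ?addr_gt0 ?sq_gt0 // mulrAC ler_pdivlMr //.
have := sq_ltA; have := sq_gt0 => h1 h2.
have : 0 < D by []. nra.
by rewrite addr_gt0 ?sq_gt0.
Qed.

Lemma quad w : A * w - B * w ^+ 2 - D = - B * (w - w1 B) * (w - w2 B).
Proof.
have h := sq_sqr.
have eD : D = (A ^+ 2 - sq B ^+ 2) / (4 * B).
  rewrite h; field; rewrite gt_eqF //.
rewrite /w1 /w2; move: (sq B) h eD => s h eD.
rewrite eD; field; rewrite gt_eqF //.
Qed.

Lemma quad_pos w : (0 < A * w - B * w ^+ 2 - D) <-> (w1 B < w < w2 B).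
Proof.
rewrite quad; have := w1_lt_w2; move: (w1 B) (w2 B) => a b ab.
split.
  move=> h; apply/andP; split.
    rewrite ltNge; apply/negP => wa.
    have : 0 <= (w - a) * (w - b) by apply: mulr_le0; lra.
    move: h; rewrite -mulrA; move: ((w - a) * (w - b)) => t.
    rewrite mulNr oppr_gt0 => h ht; have := mulr_ge0 (ltW B0) ht; lra.
  rewrite ltNge; apply/negP => wb.
  have : 0 <= (w - a) * (w - b) by apply: mulr_ge0; lra.
  move: h; rewrite -mulrA; move: ((w - a) * (w - b)) => t.
    rewrite mulNr oppr_gt0 => h ht; have := mulr_ge0 (ltW B0) ht; lra.
move=> /andP [h1 h2].
have : (w - a) * (w - b) < 0 by rewrite pmulr_rlt0; lra.
rewrite -mulrA; move: ((w - a) * (w - b)) => t ht.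
by rewrite mulNr oppr_gt0 pmulr_rlt0.
Qed.

Lemma mu_gt0 : 0 < mu B.
Proof. by rewrite /mu /mu powR_gt0 // w1_gt0. Qed.

Lemma mu_lt_nu : mu B < nu B.
Proof.
rewrite /mu /nu powR_ltE ?invr_gt0 // ?w1_lt_w2 //.
  by rewrite ltW // w1_gt0.
by rewrite ltW // (lt_trans w1_gt0) // w1_lt_w2.
Qed.

Lemma pos_iff z : 0 < z -> (0 < Hfun A B D delta z) <-> (mu B < z < nu B).
Proof.
move=> z0; have w0 : 0 < z `^ delta by apply: powR_gt0.
rewrite Hfun_fact // pmulr_rgt0 ?divr_gt0 // quad_pos //.
have hw1 := w1_gt0; have hw2 := w1_lt_w2.
have e1 : (mu B < z) = (w1 B < z `^ delta).
  by rewrite /mu -[X in _ < X](powRK d0 (ltW z0)) powR_ltE ?invr_gt0 // ?ltW.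
have e2 : (z < nu B) = (z `^ delta < w2 B).
  by rewrite /nu -[X in X < _](powRK d0 (ltW z0)) powR_ltE ?invr_gt0 // ltW // (lt_trans hw1).
by rewrite e1 e2.
Qed.

Local Notation H := (Hfun A B D delta).

Lemma pos_set : [set z : R | 0 < z /\ 0 < H z] = `]mu B, nu B[%classic.
Proof.
apply/seteqP; split => z /=; rewrite in_itv /=.
  by move=> [z0 hz]; apply/(pos_iff _ z0).
move=> hz; have z0 : 0 < z by rewrite (lt_trans mu_gt0) //; case/andP: hz.
by split => //; exact: (pos_iff _ z0).2 hz.
Qed.

Lemma attained : exists2 z0, mu B < z0 < nu B &
  (Hmax A B D delta = H z0 /\ forall z, 0 < z -> H z <= H z0).
Proof.
have mn := mu_lt_nu; have m0 := mu_gt0.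
have [c0 c0in c0max] : exists2 c, c \in `[mu B, nu B]%R &
    forall t, t \in `[mu B, nu B]%R -> H t <= H c.
  apply: EVT_max; first exact: ltW.
  apply: continuous_in_subspaceT => x; rewrite inE /= in_itv /= => /andP [hx _].
  by apply: Hcont; rewrite (lt_le_trans m0).
move: c0in; rewrite in_itv /= => /andP [c1 c2].
have c0pos : 0 < c0 by rewrite (lt_le_trans m0).
set m := (mu B + nu B) / 2.
have m0' : 0 < m by rewrite /m; lra.
have Hm : 0 < H m by apply/(pos_iff _ m0'); rewrite /m; apply/andP; split; lra.
have Hc : 0 < H c0.
  by rewrite (lt_le_trans Hm) // c0max // in_itv /=; apply/andP; split; rewrite /m; lra.
have gmax : forall z, 0 < z -> H z <= H c0.
  move=> z z0; have [hz|hz] := boolP (mu B < z < nu B).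
    by apply: c0max; rewrite in_itv /=; case/andP: hz => h1 h2; rewrite !ltW.
  rewrite (le_trans _ (ltW Hc)) //; rewrite leNgt; apply/negP => h.
  by move/negP: hz; apply; apply/(pos_iff _ z0).
exists c0; first by apply/(pos_iff _ c0pos).
split => //; apply/le_anti/andP; split.
  apply: ge_sup; first by exists (H c0), c0.
  by move=> y [z z0 <-]; apply: gmax.
apply: ub_le_sup; last by exists c0.
by exists (H c0) => y [z z0 <-]; apply: gmax.
Qed.

Lemma Hmax_gt0 : 0 < Hmax A B D delta.
Proof.
have [z0 hz [-> _]] := attained; apply/(pos_iff _ _).2 => //.
by rewrite (lt_trans mu_gt0) //; case/andP: hz.
Qed.

Lemma zbnd z : mu B < z < nu B ->
  [/\ z < (A / B) `^ delta^-1, D / A < z `^ delta & z `^ delta < A / B].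
Proof.
move=> hz; have z0 : 0 < z by rewrite (lt_trans mu_gt0) //; case/andP: hz.
have hw1 := w1_gt0; have hw2 := w1_lt_w2; have hw3 := w2_ltAB; have hw4 := w1_geDA.
have := (pos_iff _ z0).2 hz; rewrite Hfun_fact // pmulr_rgt0 ?divr_gt0 ?powR_gt0 //.
move/quad_pos => /andP [h1 h2].
split.
- case/andP: hz => _ /lt_trans; apply; rewrite /nu powR_ltE ?invr_gt0 //.
  + by rewrite ltW // (lt_trans hw1).
  + by rewrite ltW // divr_gt0.
- exact: (le_lt_trans hw4).
- exact: (lt_trans h2).
Qed.

End B.

Local Notation Hm B := (Hmax A B D delta).

Lemma Hmax_ge {B z} : 0 < B -> B < cc -> 0 < z -> Hfun A B D delta z <= Hm B.
Proof. by move=> B0 Bc z0; have [z1 _ [-> h]] := attained _ B0 Bc; apply: h. Qed.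

Lemma H_mono {B B' z} : B <= B' -> 0 < z -> Hfun A B' D delta z <= Hfun A B D delta z.
Proof.
move=> BB z0; rewrite /Hfun lerD2r lerD2l lerN2; apply: ler_wpM2r => //.
exact: powR_ge0.
Qed.

Lemma Hmax_mono {B B'} : 0 < B -> B <= B' -> B' < cc -> Hm B' <= Hm B.
Proof.
move=> B0 BB Bc; have B'0 : 0 < B' by exact: (lt_le_trans B0).
have [z2 hz [-> _]] := attained _ B'0 Bc.
have z0 : 0 < z2 by rewrite (lt_trans (mu_gt0 _ B'0 Bc)) //; case/andP: hz.
apply: (le_trans (H_mono BB z0)); apply: Hmax_ge => //; exact: (le_lt_trans BB).
Qed.

Lemma Hmax_lip {B B'} : 0 < B -> B <= B' -> B' < cc ->
  Hm B - Hm B' <= (B' - B) * ((A / B) `^ delta^-1 * (A / B)).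
Proof.
move=> B0 BB Bc; have B'0 : 0 < B' by exact: (lt_le_trans B0).
have Bc' : B < cc by exact: (le_lt_trans BB).
have [z1 hz [-> _]] := attained _ B0 Bc'.
have z0 : 0 < z1 by rewrite (lt_trans (mu_gt0 _ B0 Bc')) //; case/andP: hz.
have [k1 k2 k3] := zbnd _ B0 Bc' _ hz.
have h := Hmax_ge B'0 Bc z0.
have e : Hfun A B' D delta z1 = Hfun A B D delta z1 - (B' - B) * (z1 * z1 `^ delta).
  rewrite /Hfun (@powRD _ z1 1 delta); last by apply/implyP => _; rewrite gt_eqF.
  by rewrite powRr1 ?ltW //; ring.
have : z1 * z1 `^ delta <= (A / B) `^ delta^-1 * (A / B).
  by apply: ler_pM; [exact: ltW | exact: powR_ge0 | exact: ltW | exact: ltW].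
have : 0 <= B' - B by rewrite subr_ge0.
move: (z1 * z1 `^ delta) ((A / B) `^ delta^-1 * (A / B)) e h => t K e h h1 h2.
have : (B' - B) * t <= (B' - B) * K by apply: ler_wpM2l.
lra.
Qed.

Lemma Hmax_ub {B} : 0 < B -> B < cc ->
  Hm B <= (A / B) `^ delta^-1 * (A / D) * (A ^+ 2 / (4 * B) - D).
Proof.
move=> B0 Bc; have [z1 hz [-> _]] := attained _ B0 Bc.
have z0 : 0 < z1 by rewrite (lt_trans (mu_gt0 _ B0 Bc)) //; case/andP: hz.
have [k1 k2 k3] := zbnd _ B0 Bc _ hz.
have hp := (pos_iff _ B0 Bc _ z0).2 hz.
rewrite Hfun_fact // in hp *.
have w0 : 0 < z1 `^ delta by apply: powR_gt0.
have q0 : 0 < A * z1 `^ delta - B * z1 `^ delta ^+ 2 - D.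
  by move: hp; rewrite pmulr_rgt0 // divr_gt0.
apply: ler_pM.
- by rewrite ltW // divr_gt0.
- exact: ltW.
- apply: ler_pM; [exact: ltW | by rewrite invr_ge0 ltW | exact: ltW | ].
  by rewrite -invf_div lef_pV2 ?posrE ?divr_gt0 // ltW.
- have e : A ^+ 2 / (4 * B) - D - (A * z1 `^ delta - B * z1 `^ delta ^+ 2 - D)
        = B * (z1 `^ delta - A / (2 * B)) ^+ 2.
    by field; rewrite gt_eqF.
  by rewrite -subr_ge0 e; apply: mulr_ge0; [exact: ltW | exact: sqr_ge0].
  Qed.

Lemma cvg_rat (K c : R) : c != 0 ->
  K * (A ^+ 2 / (4 * B) - D) @[B --> c] --> K * (A ^+ 2 / (4 * c) - D).
Proof.
move=> c0.
apply: cvgM; first exact: cvg_cst.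
apply: cvgB; last exact: cvg_cst.
apply: cvgM; first exact: cvg_cst.
apply: cvgV; first by rewrite mulf_neq0.
apply: cvgM; first exact: cvg_cst.
exact: cvg_id.
Qed.

Lemma lim_Hmax : Hm B @[B --> cc^'-] --> 0^'+.
Proof.
have c0 := cc_gt0.
apply: to_right; last first.
  near=> B; apply: Hmax_gt0.
  - by near: B; apply: nbhs_left_gt.
  - by near: B; apply: nbhs_left_lt.
set K := (2 * A / cc) `^ delta^-1 * (A / D).
apply: (@squeeze_cvgr R (cc^'-) _ R (fun=> 0) (fun B => K * (A ^+ 2 / (4 * B) - D)) (fun B => Hm B)).
- near=> B.
  have B0 : cc / 2 < B by near: B; apply: nbhs_left_gt; lra.
  have Bc : B < cc by near: B; apply: nbhs_left_lt.
  have B0' : 0 < B by lra.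
  apply/andP; split; first exact/ltW/Hmax_gt0.
  apply: (le_trans (Hmax_ub B0' Bc)); rewrite /K ler_wpM2r //.
    rewrite subr_ge0 ler_pdivlMr ?mulr_gt0 //.
    move: Bc; rewrite ltcc => h; have e : D * (4 * B) = 4 * B * D by ring.
    lra.
  apply: ler_wpM2r; first by rewrite ltW // divr_gt0.
  rewrite powR_leE ?invr_gt0 ?ltW ?divr_gt0 ?mulr_gt0 //.
  rewrite ltr_pdivrMr // mulrAC ltr_pdivlMr //.
  have : 0 < A * (2 * B - cc) by rewrite mulr_gt0 //; lra.
  have e : A * (2 * B - cc) = 2 * A * B - A * cc by ring.
  by rewrite e subr_gt0.
- exact: cvg_cst.
- have -> : (0 : R) = K * (A ^+ 2 / (4 * cc) - D).
    by rewrite /cc; field; rewrite !gt_eqF.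
  by apply: cvg_at_left_filter; apply: cvg_rat; rewrite gt_eqF.
Unshelve. all: end_near.
Qed.

Lemma sq_cc : sq cc = 0.
Proof.
rewrite /sq; have -> : A ^+ 2 - 4 * cc * D = 0.
  by rewrite /cc; field; rewrite gt_eqF.
exact: sqrtr0.
Qed.

Lemma sq_cont : sq B @[B --> cc] --> sq cc.
Proof.
apply: (@cvg_comp _ _ _ (fun B => A ^+ 2 - 4 * B * D) Num.sqrt); last exact: sqrt_continuous.
apply: cvgB; first exact: cvg_cst.
apply: cvgM; last exact: cvg_cst.
apply: cvgM; first exact: cvg_cst.
exact: cvg_id.
Qed.

Lemma w_cont (e : R) : (A + e * sq B) / (2 * B) @[B --> cc] --> A / (2 * cc).
Proof.
have c0 := cc_gt0.
have -> : A / (2 * cc) = (A + e * sq cc) / (2 * cc) by rewrite sq_cc mulr0 addr0.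
apply: cvgM.
  apply: cvgD; first exact: cvg_cst.
  by apply: cvgM; [exact: cvg_cst | exact: sq_cont].
apply: cvgV; first by rewrite mulf_neq0 // gt_eqF.
apply: cvgM; first exact: cvg_cst.
exact: cvg_id.
Qed.

Lemma pw_cont (e : R) : ((A + e * sq B) / (2 * B)) `^ delta^-1 @[B --> cc]
   --> (A / (2 * cc)) `^ delta^-1.
Proof.
have c0 := cc_gt0.
apply: (@cvg_comp _ _ _ (fun B => (A + e * sq B) / (2 * B)) (fun x => x `^ delta^-1)).
  exact: w_cont.
have p0 : 0 < A / (2 * cc) by rewrite divr_gt0 // mulr_gt0.
exact: (powR_cont _ _ p0).
Qed.

Lemma lim_width : nu B - mu B @[B --> cc^'-] --> 0^'+.
Proof.
have c0 := cc_gt0.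
apply: to_right; last first.
  near=> B; rewrite subr_gt0; apply: mu_lt_nu.
  - by near: B; apply: nbhs_left_gt.
  - by near: B; apply: nbhs_left_lt.
apply: cvg_at_left_filter.
rewrite -(subrr ((A / (2 * cc)) `^ delta^-1)).
apply: cvgB.
  have := pw_cont 1; apply: cvg_trans; apply: near_eq_cvg; near=> B.
  by rewrite /nu /w2 mul1r.
have := pw_cont (-1); apply: cvg_trans; apply: near_eq_cvg; near=> B.
by rewrite /mu /w1 mulN1r.
Unshelve. all: end_near.
Qed.

Definition KK (b : R) := (A / b) `^ delta^-1 * (A / b).

Lemma KK_mono b B : 0 < b -> b <= B -> KK B <= KK b.
Proof.
move=> b0 bB; have B0 : 0 < B by exact: (lt_le_trans b0).
have h : A / B <= A / b by rewrite ler_pdivrMr // mulrAC ler_pdivlMr // ler_wpM2l // ltW.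
rewrite /KK; apply: ler_pM => //; first exact: powR_ge0.
  by apply/ltW/divr_gt0.
by rewrite powR_leE ?invr_gt0 //; apply/ltW/divr_gt0.
Qed.

Lemma lip_abs b x y : 0 < b -> b <= x -> x < cc -> b <= y -> y < cc ->
  `|Hm x - Hm y| <= KK b * `|x - y|.
Proof.
move=> b0 bx xc hby yc.
wlog xy : x y bx xc hby yc / x <= y.
  move=> W; have [h|h] := leP x y; first exact: W.
  by rewrite distrC [`|x - y|]distrC; apply: W => //; exact: ltW.
have x0 : 0 < x by exact: (lt_le_trans b0).
have m := Hmax_mono x0 xy yc.
have l := Hmax_lip x0 xy yc.
have k := KK_mono _ _ b0 bx.
rewrite ger0_norm ?subr_ge0 // distrC ger0_norm ?subr_ge0 //.
apply: (le_trans l); rewrite mulrC ler_wpM2r // ?subr_ge0 //.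
Qed.

Lemma Hm_cont x : 0 < x -> x < cc -> {for x, continuous (fun B => Hm B)}.
Proof.
move=> x0 xc; set b := x / 2.
have b0 : 0 < b by rewrite /b; lra.
have K0 : 0 < KK b by rewrite /KK mulr_gt0 ?powR_gt0 ?divr_gt0.
apply/cvgrPdist_lt => e e0.
have dd : 0 < Num.min (e / (2 * KK b)) (Num.min (x / 2) ((cc - x) / 2)).
  by rewrite !lt_min !divr_gt0 // ?subr_gt0 // (mulr_gt0 _ K0).
have hn : \forall t \near x, `|x - t| < Num.min (e / (2 * KK b)) (Num.min (x / 2) ((cc - x) / 2)).
  exact: (@cvgr_dist_lt _ _ _ (nbhs x) _ (fun t => t) x (@cvg_id _ (nbhs x)) _ dd).
apply: filterS hn => y; rewrite /= !lt_min => /and3P [h1 h2 h3].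
have hxy : `|x - y| < x / 2 by [].
have hxy2 : `|x - y| < (cc - x) / 2 by [].
move: hxy hxy2; rewrite ltr_norml => /andP [a1 a2]; rewrite ltr_norml => /andP [a3 a4].
apply: (le_lt_trans (lip_abs b x y b0 _ xc _ _)).
- rewrite /b; lra.
- rewrite /b; lra.
- lra.
have : KK b * `|x - y| <= KK b * (e / (2 * KK b)) by apply: ler_wpM2l; apply: ltW.
have -> : KK b * (e / (2 * KK b)) = e / 2 by field; rewrite gt_eqF.
lra.
Qed.

Lemma Hfun_alt B z : 0 < z ->
  Hfun A B D delta z = A * z - B * (z * z `^ delta) - D * (z / z `^ delta).
Proof.
move=> z0; rewrite /Hfun (@powRD _ z 1 delta); last by apply/implyP => _; rewrite gt_eqF.
rewrite (@powRD _ z 1 (-delta)); last by apply/implyP => _; rewrite gt_eqF.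
have e : z `^ (-delta) = (z `^ delta)^-1 by apply: powRN.
by rewrite e powRr1 ?ltW.
Qed.

Lemma exists_Bp p : 0 < p -> exists b, (0 < b < cc) /\ Hm b = p.
Proof.
move=> p0; have c0 := cc_gt0.
have q0 : 0 < 4 * (p + 1) / A by rewrite divr_gt0 // mulr_gt0 // addr_gt0.
have r0 := powR_ge0 (2 * D / A) delta^-1.
set z := 4 * (p + 1) / A + (2 * D / A) `^ delta^-1.
have z0 : 0 < z by rewrite /z; lra.
set w := z `^ delta.
have w0 : 0 < w by apply: powR_gt0.
have DA0 : 0 <= 2 * D / A by rewrite ltW // divr_gt0 // mulr_gt0.
have wD : 2 * D / A <= w.
  rewrite /w -[X in X <= _](powRVK d0 DA0) powR_leE //; first by rewrite /z; lra.
  exact: ltW.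
set Blo := Num.min (cc / 2) ((p + 1) / (z * w)).
have Blo0 : 0 < Blo.
  by rewrite /Blo lt_min; apply/andP; split; [lra | rewrite divr_gt0 // ?mulr_gt0 // addr_gt0].
have Blo1 : Blo <= cc / 2 by rewrite /Blo ge_min lexx.
have Blo2 : Blo <= (p + 1) / (z * w) by rewrite /Blo ge_min lexx orbT.
have Bloc : Blo < cc by lra.
have HBlo : p < Hm Blo.
  apply: (lt_le_trans _ (Hmax_ge Blo0 Bloc z0)).
  rewrite Hfun_alt //.
  have e1 : Blo * (z * w) <= p + 1 by rewrite -ler_pdivlMr // mulr_gt0.
  have e2 : D * (z / w) <= A * z / 2.
    rewrite mulrA ler_pdivrMr //.
    move: wD; rewrite ler_pdivrMr // => wD.
    have : 0 <= z * (A * w - 2 * D) by apply: mulr_ge0; lra.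
    move=> h; have e : A * z / 2 * w = (z * (A * w)) / 2 by field.
    rewrite e; lra.
  have e3 : 4 * (p + 1) <= A * z.
    rewrite /z [X in _ <= X]mulrDr [X in _ <= X + _]mulrC divfK ?gt_eqF // lerDl.
    by apply: mulr_ge0 => //; exact: ltW.
  rewrite -/w; lra.
have [Bh [h1 [h2 h3]]] : exists Bh, Hm Bh < p /\ Blo < Bh /\ Bh < cc.
  have L := lim_Hmax _ (nbhs_right_lt p0).
  have : \forall B \near cc^'-, Hm B < p /\ Blo < B /\ B < cc.
    near=> B; split; [|split].
    - by near: B; exact: L.
    - by near: B; exact: nbhs_left_gt.
    - by near: B; exact: nbhs_left_lt.
  move=> hF; exact: (@filter_ex _ (cc^'-) _ _ hF).
have [b hb e] : exists2 c, c \in `[Blo, Bh] & Hm c = p.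
  apply: IVT; first exact: ltW.
    apply: continuous_in_subspaceT => x; rewrite inE /= in_itv /= => /andP [x1 x2].
    apply: Hm_cont; [exact: (lt_le_trans Blo0) | exact: (le_lt_trans x2)].
  apply/andP; split.
    by rewrite ge_min; apply/orP; right; exact: ltW.
  by rewrite le_max; apply/orP; left; exact: ltW.
exists b; split => //; move: hb; rewrite in_itv /= => /andP [b1 b2].
apply/andP; split; [exact: (lt_le_trans Blo0) | exact: (le_lt_trans b2)].
Unshelve. all: end_near.
Qed.

Lemma main_Q :
  (exists mu' nu' : R -> R,
     (forall B : R, 0 < B < cc ->
        0 < Hmax A B D delta /\
        [set z : R | 0 < z /\ 0 < Hfun A B D delta z] = `]mu' B, nu' B[%classic /\
        (exists2 z0 : R, mu' B < z0 < nu' B & Hmax A B D delta = Hfun A B D delta z0)) /\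
     (Hmax A B D delta @[B --> cc^'-] --> 0^'+) /\
     (nu' B - mu' B @[B --> cc^'-] --> 0^'+)) /\
  (exists Bp : R -> R,
     (forall p : R, 0 < p -> 0 < Bp p < cc /\ Hmax A (Bp p) D delta = p) /\
     (Bp p @[p --> 0^'+] --> cc)).
Proof.
split.
  exists mu, nu; split; last by split; [exact: lim_Hmax | exact: lim_width].
  move=> B /andP [B0 Bc]; split; first exact: Hmax_gt0.
  split; first exact: pos_set.
  by have [z0 hz [e _]] := attained _ B0 Bc; exists z0.
have : forall p, exists b, 0 < p -> 0 < b < cc /\ Hm b = p.
  move=> p; have [p0|p0] := ltP 0 p.
    by have [b hb] := exists_Bp _ p0; exists b.
  by exists 0 => h; exfalso; lra.
case/choice => Bp hBp; exists Bp; split; first by move=> p p0; apply: hBp.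
apply/cvgrPdist_lt => e e0.
have c0 := cc_gt0.
set b' := cc - Num.min e cc / 2.
have hm : 0 < Num.min e cc by rewrite lt_min e0 c0.
have hm1 : Num.min e cc <= e by rewrite ge_min lexx.
have hm2 : Num.min e cc <= cc by rewrite ge_min lexx orbT.
have b0 : 0 < b' by rewrite /b'; lra.
have bc : b' < cc by rewrite /b'; lra.
have q0 := Hmax_gt0 _ b0 bc.
near=> p.
have p0 : 0 < p by near: p; exact: nbhs_right_gt.
have pq : p < Hm b' by near: p; exact: nbhs_right_lt.
have [/andP [B0 Bc] eB] := hBp p p0.
have Bb : b' < Bp p.
  rewrite ltNge; apply/negP => h.
  have := Hmax_mono B0 h bc; rewrite eB; lra.
rewrite ger0_norm; last by rewrite subr_ge0 ltW.
rewrite /b' in Bb; lra.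
Unshelve. all: end_near.
Qed.

End Q.

Theorem lemma3p2 (R : realType) (delta A D : R) :
  0 < delta < 1 -> 0 < A -> 0 < D ->
  let c := A ^+ 2 / (4 * D) in
  (exists mu nu : R -> R,
     (forall B : R, 0 < B < c ->
        0 < Hmax A B D delta /\
        [set z : R | 0 < z /\ 0 < Hfun A B D delta z] = `]mu B, nu B[%classic /\
        (exists2 z0 : R, mu B < z0 < nu B & Hmax A B D delta = Hfun A B D delta z0)) /\
     (Hmax A B D delta @[B --> c^'-] --> 0^'+) /\
     (nu B - mu B @[B --> c^'-] --> 0^'+)) /\
  (exists Bp : R -> R,
     (forall p : R, 0 < p -> 0 < Bp p < c /\ Hmax A (Bp p) D delta = p) /\
     (Bp p @[p --> 0^'+] --> c)).
Proof.
move=> /andP [d0 d1] A0 D0 c.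
exact: main_Q.
Qed.
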